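(* Let $\gamma,\lambda\in(0,1)$, $H>1$ and $T\in(0,\infty)$. Let $g:[0,\infty)\to\mathbb R$ be a nonnegative continuous function with $|g(t)-g(s)|\le H|t-s|^\gamma$ for all $t,s\ge0$ and $g(0)=0$. Then $$\Big(\int_0^T g(t)\,dt\Big)^{\frac{\gamma\lambda+1}{\gamma+1}}\le N\,H^{1/\gamma}\int_0^T g(t)^\lambda\,dt,$$ where $N=N(\gamma,\lambda)$. *)

(* Defs.v *)
From HB Require Import structures.
From mathcomp Require Import all_boot all_order all_algebra.
From mathcomp Require Import all_classical all_reals all_analysis.
Set Implicit Arguments.
Unset Strict Implicit.
Unset Printing Implicit Defensive.

(* Main.v *)
Require Import Defs.
From HB Require Import structures.
From mathcomp Require Import all_boot all_order all_algebra.
From mathcomp Require Import all_classical all_reals all_analysis.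
From mathcomp Require Import ring lra.
Import Order.TTheory GRing.Theory Num.Theory.
Import numFieldNormedType.Exports.
Local Open Scope classical_set_scope.
Local Open Scope ring_scope.

Section H.
Variable R : realType.
Notation mu := (@lebesgue_measure R).

Lemma powRVl (x r : R) : 0 < x -> (x^-1) `^ r = (x `^ r)^-1.
Proof. by move=> x0; rewrite -powR_inv1 ?ltW// -powRrM mulN1r powRN. Qed.

Lemma sub_Rint (A B : set R) (f : R -> R) : measurable A -> measurable B ->
  A `<=` B -> (forall x, B x -> 0 <= f x) -> mu.-integrable B (EFin \o f) ->
  \int[mu]_(x in A) f x <= \int[mu]_(x in B) f x.
Proof.
move=> mA mB AB f0 iB.
have iA : mu.-integrable A (EFin \o f) by exact: integrableS iB.
rewrite /Rintegral fine_le//; [exact: integrable_fin_num|exact: integrable_fin_num|].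
apply: ge0_subset_integral => //; first exact: measurable_int iB.
all: by move=> x Bx; rewrite lee_fin f0.
Qed.

Lemma meas_itv (a b : R) : a <= b -> fine (mu `[a, b]) = b - a.
Proof.
move=> ab; rewrite lebesgue_measure_itv/= lte_fin.
rewrite le_eqVlt in ab; case/predU1P: ab => [->|ab]; first by rewrite ltxx subrr.
by rewrite ab.
Qed.

Lemma bd_int (a b C : R) (f : R -> R) : measurable_fun `[a, b] f ->
  (forall x, x \in `[a, b] -> `|f x| <= C) -> mu.-integrable `[a, b] (EFin \o f).
Proof.
move=> mf hb; apply: measurable_bounded_integrable => //.
  have h : (mu `[a, b] < +oo)%E.
    by rewrite lebesgue_measure_itv; case: ifP => _; [rewrite -EFinD ltry|rewrite ltry].
  exact: h.
exists C; split; first exact: num_real.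
by move=> x Cx y Ay; exact: le_trans (hb y Ay) (ltW Cx).
Qed.
End H.

Theorem lemma4p2 (R : realType) (gamma lambda : R)
  (hgamma : 0 < gamma < 1) (hlambda : 0 < lambda < 1) :
  exists N : R, forall (H T : R) (g : R -> R),
    1 < H -> 0 < T ->
    (forall t, 0 <= t -> 0 <= g t) ->
    {within `[0, +oo[, continuous g} ->
    (forall t s, 0 <= t -> 0 <= s -> `|g t - g s| <= H * (`|t - s| `^ gamma)) ->
    g 0 = 0 ->
    (\int[lebesgue_measure]_(t in `[0, T]) g t) `^ ((gamma * lambda + 1) / (gamma + 1))
      <= N * H `^ (gamma^-1) * \int[lebesgue_measure]_(t in `[0, T]) (g t `^ lambda).
Proof.
case/andP: hgamma => g0 g1; case/andP: hlambda => l0 l1.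
set a := (gamma * lambda + 1) / (gamma + 1).
set e := gamma^-1 + lambda.
exists (2 `^ e) => H T g H1 T0 gge0 gcont gHol gz.
set I := \int[lebesgue_measure]_(t in `[0, T]) g t.
set J := \int[lebesgue_measure]_(t in `[0, T]) (g t `^ lambda).
set K := H `^ (gamma^-1).
have mT : measurable (`[0, T] : set R) by [].
have gcT : {within `[0, T], continuous g}.
  apply: continuous_subspaceW gcont => t /=; rewrite !in_itv/= => /andP[-> _]//.

have ig : lebesgue_measure.-integrable `[0, T] (EFin \o g).
  exact: continuous_compact_integrable (@segment_compact _ 0 T) gcT.
have [t0 t0T gmax] := EVT_max (ltW T0) gcT.
set M := g t0.
move: (t0T); rewrite in_itv/= => /andP[t00 t0leT].
have gT t : t \in `[0, T] -> 0 <= g t.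
  by rewrite in_itv/= => /andP[t0' _]; exact: gge0.
have M0 : 0 <= M by exact: gge0.
have J0 : 0 <= J by apply: Rintegral_ge0 => x _; exact: powR_ge0.
have I0 : 0 <= I by apply: Rintegral_ge0 => x xT; exact: gT.
have a0 : 0 < a by rewrite divr_gt0// ?addr_gt0// mulr_gt0.
have a1 : a <= 1 by rewrite ler_pdivrMr ?addr_gt0// mul1r lerD2r ger_pMr// ltW.
have K1 : 1 <= K.
  rewrite /K -[leLHS](powRr0 H); apply: ler_powR; first exact: ltW.
  by rewrite invr_ge0 ltW.
have N1 : 1 <= 2 `^ e.
  rewrite -[leLHS](powRr0 2); apply: ler_powR; first by rewrite ler1n.
  by rewrite addr_ge0// ?invr_ge0 ltW.
have mg : measurable_fun `[0, T] g by apply/measurable_realfun.measurable_EFinP; exact: measurable_int ig.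
have igl : lebesgue_measure.-integrable `[0, T] (EFin \o (fun t => g t `^ lambda)).
  apply: (@bd_int _ _ _ (M `^ lambda)).
    exact: measurableT_comp (@measurable_realfun.measurable_powR R lambda) mg.
  move=> x xT; rewrite ger0_norm ?powR_ge0//.
  by apply: ge0_ler_powR; rewrite ?nnegrE ?(ltW l0)// ?gT// gmax.
have [M00|Mpos] := eqVneq M 0.
  have -> : I = 0.
    rewrite /I (@eq_Rintegral _ _ _ lebesgue_measure _ (fun=> 0)); first by rewrite Rintegral_cst// mul0r.
    move=> x; rewrite inE => xT; apply/eqP; rewrite eq_le gT//= -M00 gmax//.
  by rewrite powR0 ?gt_eqF// mulr_ge0// mulr_ge0// powR_ge0.
have M0' : 0 < M by rewrite lt_neqAle eq_sym Mpos.
have P : M `^ (lambda - 1) * I <= J.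
  rewrite /I -RintegralZl//; apply: le_Rintegral => //.
    apply: (eq_integrable _ _ _ _ (integrableZl _ (M `^ (lambda - 1)) ig)) => //.
  move=> x xT; have gx := gT x xT; have gxM : g x <= M := gmax x xT.
  have e1 : g x = g x `^ (1 - lambda) * g x `^ lambda.
    by rewrite -powRD ?subrK ?powRr1// oner_eq0.
  rewrite [in leLHS]e1 mulrA; apply: ler_piMl; first exact: powR_ge0.
  apply: (@le_trans _ _ (M `^ (lambda - 1) * M `^ (1 - lambda))).
    apply: ler_wpM2l; first exact: powR_ge0.
    by apply: ge0_ler_powR; rewrite ?nnegrE// subr_ge0 ltW.
  rewrite -powRD; last by rewrite Mpos implybT.
  have -> : lambda - 1 + (1 - lambda) = 0 by ring.
  by rewrite powRr0.
have Hpos : 0 < H by exact: lt_trans ltr01 H1.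
have K0 : 0 < K by exact: lt_le_trans ltr01 K1.
have M20 : 0 < M / 2 by rewrite divr_gt0.
set d := (M / 2) `^ (gamma^-1) * K^-1.
have d0 : 0 < d by rewrite mulr_gt0 ?powR_gt0 ?invr_gt0.
have dg : d `^ gamma = M / (2 * H).
  rewrite /d powRM ?powR_ge0 ?invr_ge0 ?ltW// powRVl// /K -!powRrM mulVf ?gt_eqF//.
  by rewrite !powRr1 ?ltW// invfM mulrA.
have MH : M <= H * t0 `^ gamma.
  by have := gHol t0 0 t00 (lexx 0); rewrite gz !subr0 ger0_norm// ger0_norm.
have dt0 : d <= t0.
  rewrite leNgt; apply/negP => t0d.
  have := ge0_ler_powR (ltW g0) t00 (ltW d0) (ltW t0d); rewrite dg => h.
  have := le_trans MH (ler_wpM2l (ltW Hpos) h).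
  have -> : H * (M / (2 * H)) = M / 2 by field; rewrite gt_eqF.
  lra.
have sub : (`[t0 - d, t0] : set R) `<=` `[0, T].
  move=> x /=; rewrite !in_itv/= => /andP[h1 h2]; apply/andP; split; lra.
set Q' := d * (M / 2) `^ lambda.
have Q : Q' <= J.
  apply: le_trans (@sub_Rint R _ _ _ _ _ sub _ igl) => //; last by move=> x xT; exact: powR_ge0.
  have -> : Q' = \int[lebesgue_measure]_(x in `[t0 - d, t0]) (M / 2) `^ lambda.
    rewrite Rintegral_cst// meas_itv; last by rewrite gerBl ltW.
    by rewrite /Q' mulrC opprB addrC subrK.
  apply: le_Rintegral => //.
  - apply: (@bd_int _ _ _ ((M / 2) `^ lambda)) => //.
    by move=> x _; rewrite ger0_norm ?powR_ge0.
  - by apply: integrableS igl.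
  move=> x xT; have xT' := sub x xT; have gx := gT x xT'.
  move: (xT) => /=; rewrite in_itv/= => /andP[h1 h2].
  have x0 : 0 <= x by lra.
  apply: ge0_ler_powR; rewrite ?nnegrE ?(ltW l0) ?(ltW M20)//.
  have hx := gHol x t0 x0 t00.
  have hp : `|x - t0| `^ gamma <= d `^ gamma.
    by apply: ge0_ler_powR; rewrite ?nnegrE ?(ltW g0) ?(ltW d0)// ler_norml; apply/andP; split; lra.
  have := le_trans hx (ler_wpM2l (ltW Hpos) hp); rewrite dg ler_norml => /andP[h _].
  have e2 : H * (M / (2 * H)) = M / 2 by field; rewrite gt_eqF.
  rewrite e2 in h; rewrite /M in h *; lra.
set p := M `^ (lambda - 1) * I.
have p0 : 0 <= p by rewrite mulr_ge0 ?powR_ge0.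
have Q0 : 0 <= Q' by rewrite mulr_ge0 ?powR_ge0// ltW.
have eI : I = M `^ (1 - lambda) * p.
  rewrite /p mulrA -powRD; last by rewrite Mpos implybT.
  have -> : 1 - lambda + (lambda - 1) = 0 by ring.
  by rewrite powRr0 mul1r.
have eMe : 2 `^ e * K * Q' = M `^ e.
  rewrite /Q' /d.
  have -> : 2 `^ e * K * ((M / 2) `^ gamma^-1 / K * (M / 2) `^ lambda) =
    2 `^ e * ((M / 2) `^ gamma^-1 * (M / 2) `^ lambda) * (K / K) by ring.
  rewrite divff ?gt_eqF// mulr1 -powRD; last by rewrite (gt_eqF M20) implybT.
  rewrite -powRM ?ltW// mulrC divfK//.
have eM : M `^ ((1 - lambda) * a) = (2 `^ e * K) `^ (1 - a) * Q' `^ (1 - a).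
  rewrite -powRM; last 2 first.
  - by rewrite mulr_ge0 ?powR_ge0// ltW.
  - exact: Q0.
  rewrite eMe -powRrM.
  congr (_ `^ _); rewrite /a /e; field.
  by apply/andP; split; rewrite gt_eqF// addr_gt0.
rewrite eI powRM ?powR_ge0// -powRrM eM -mulrA.
apply: ler_pM; rewrite ?powR_ge0 ?mulr_ge0 ?powR_ge0//.
  apply: ler1_powR; first exact: mulr_ege1.
  by rewrite gerBl ltW.
have eJ : J = J `^ (1 - a) * J `^ a.
  by rewrite -powRD ?subrK ?powRr1// oner_eq0.
rewrite [leRHS]eJ.
apply: ler_pM; rewrite ?powR_ge0//.
  by apply: ge0_ler_powR; rewrite ?nnegrE ?subr_ge0.
exact: (ge0_ler_powR (ltW a0) p0 J0 P).
Qed.
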